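(* Let $N\ge 4$ be an even integer and $\Lambda=\{1,\dots,N\}$ a ring of sites with periodic boundary conditions (indices taken mod $N$). To each site $i\in\Lambda$ attach two spin-$1/2$ degrees of freedom labelled $(i,\mathrm{L})$ and $(i,\mathrm{R})$, so the total Hilbert space is $(\mathbb{C}^{2})^{\otimes 2N}$. For each $i\in\Lambda$ let the bond $i^*$ denote the pair of spins $((i,\mathrm{R}),(i+1,\mathrm{L}))$, and define the two bond states $$|\boldsymbol{\downarrow}\rangle_{i^*}=\tfrac{1}{\sqrt2}\big(|\uparrow\downarrow\rangle-|\downarrow\uparrow\rangle\big)_{(i,\mathrm{R}),(i+1,\mathrm{L})},\qquad |\boldsymbol{\uparrow}\rangle_{i^*}=|\uparrow\uparrow\rangle_{(i,\mathrm{R}),(i+1,\mathrm{L})}.$$ Let $$Q^+_{\mathrm{frac}}=\sum_{j\in\Lambda}(-1)^j\,|\boldsymbol{\uparrow}\boldsymbol{\uparrow}\rangle\langle\boldsymbol{\downarrow}\boldsymbol{\downarrow}|_{j^*,(j+1)^*},\qquad |\mathcal{S}^{\mathrm{frac}}_n\rangle=(Q^+_{\mathrm{frac}})^n\bigotimes_{j\in\Lambda}|\boldsymbol{\downarrow}\rangle_{j^*}\quad(n\ge 0).$$ Then for every $n\ge0$ and every $i\in\Lambda$ there exist (unnormalized, possibly zero) vectors $|\Xi^0_{\sigma\sigma'}\rangle$ ($\sigma,\sigma'\in\{\uparrow,\downarrow\}$), $|\Xi^1\rangle$, $|\Xi^2\rangle$ in the Hilbert space of all spins belonging to bonds other than $(i-1)^*,i^*,(i+1)^*$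 such that $$|\mathcal{S}^{\mathrm{frac}}_n\rangle=\sum_{\sigma,\sigma'\in\{\uparrow,\downarrow\}}|\boldsymbol{\sigma}\boldsymbol{\downarrow}\boldsymbol{\sigma'}\rangle_{(i-1)^*,i^*,(i+1)^*}\otimes|\Xi^0_{\sigma\sigma'}\rangle+\big(|\boldsymbol{\uparrow}\boldsymbol{\uparrow}\boldsymbol{\downarrow}\rangle-|\boldsymbol{\downarrow}\boldsymbol{\uparrow}\boldsymbol{\uparrow}\rangle\big)_{(i-1)^*,i^*,(i+1)^*}\otimes|\Xi^1\rangle+|\boldsymbol{\uparrow}\boldsymbol{\uparrow}\boldsymbol{\uparrow}\rangle_{(i-1)^*,i^*,(i+1)^*}\otimes|\Xi^2\rangle,$$ where $|\boldsymbol{a}\boldsymbol{b}\boldsymbol{c}\rangle_{(i-1)^*,i^*,(i+1)^*}=|\boldsymbol{a}\rangle_{(i-1)^*}\otimes|\boldsymbol{b}\rangle_{i^*}\otimes|\boldsymbol{c}\rangle_{(i+1)^*}$.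
   Context: This is the ''fractionalized'' spin-1/2 description of the spin-1 AKLT chain: each spin-1 site is split into two spin-1/2's, and the scar tower is built from the valence-bond-solid state $\bigotimes_j|\boldsymbol{\downarrow}\rangle_{j^*}$ by the operator $Q^+_{\mathrm{frac}}$, which turns two adjacent singlet bonds into two fully polarized bonds with a staggered sign. Bold letters denote bond states as defined in the claim. *)

(* Defs.v *)
From HB Require Import structures.
From mathcomp Require Import all_boot all_order all_algebra.
Set Implicit Arguments. Unset Strict Implicit. Unset Printing Implicit Defensive.
Import Order.TTheory GRing.Theory Num.Theory.
Local Open Scope ring_scope.

(* Sites of the ring: 'I_N, where ordinal k stands for site k (site N is 0;
   N even, so (-1)^N = (-1)^0).
   A spin is a pair (site, side) with side false = L, true = R.
   A spin configuration assigns true (= up) or false (= down) to each spin.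
   A vector of (C^2)^{⊗2N} is its coefficient function on configurations
   (computational basis). *)

Definition spin N := ('I_N * bool)%type.
Definition config N := {ffun spin N -> bool}.
Definition state (C : numClosedFieldType) N := {ffun config N -> C}.

Definition bondR N (j : 'I_N) : spin N := (j, true).
Definition bondL N (j : 'I_N) : spin N := (ordS j, false).
Definition in_bond N (j : 'I_N) (x : spin N) : bool :=
  (x == bondR j) || (x == bondL j).

Definition bdown (C : numClosedFieldType) N (j : 'I_N) (s : config N) : C :=
  if s (bondR j) && ~~ s (bondL j) then 1 / sqrtC 2
  else if ~~ s (bondR j) && s (bondL j) then - (1 / sqrtC 2) else 0.

Definition bup (C : numClosedFieldType) N (j : 'I_N) (s : config N) : C :=
  if s (bondR j) && s (bondL j) then 1 else 0.

Definition bstate (C : numClosedFieldType) N (b : bool) (j : 'I_N) (s : config N) : C :=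
  if b then bup C j s else bdown C j s.

(* the operator |up up><down down|_{j*,(j+1)*} (tensor identity elsewhere),
   applied to a vector psi *)
Definition Qloc (C : numClosedFieldType) N (j : 'I_N) (psi : state C N) : state C N :=
  [ffun s : config N => \sum_(t : config N)
     (if [forall x, ~~ (in_bond j x || in_bond (ordS j) x) ==> (s x == t x)]
      then 1 else 0)
     * (bup C j s * bup C (ordS j) s)
     * ((bdown C j t)^* * (bdown C (ordS j) t)^*) * psi t].

Definition Qfrac (C : numClosedFieldType) N (psi : state C N) : state C N :=
  [ffun s : config N => \sum_(j : 'I_N) (-1) ^+ (nat_of_ord j) * Qloc j psi s].

Definition vbs (C : numClosedFieldType) N : state C N :=
  [ffun s : config N => \prod_(j : 'I_N) bdown C j s].

Definition Sfrac (C : numClosedFieldType) N (n : nat) : state C N :=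
  iter n (@Qfrac C N) (vbs C N).

Definition outside3 N (i : 'I_N) (x : spin N) : bool :=
  ~~ [|| in_bond (ord_pred i) x, in_bond i x | in_bond (ordS i) x].

(* a vector of the Hilbert space of the spins in P, viewed (tensored with
   nothing) as a function on full configurations depending only on spins in P *)
Definition depends_only (C : numClosedFieldType) N (P : pred (spin N))
  (f : state C N) : Prop :=
  forall s t : config N, (forall x, P x -> s x = t x) -> f s = f t.

(* Main.v *)
Require Import Defs.
From HB Require Import structures.
From mathcomp Require Import all_boot all_order all_algebra.
From mathcomp Require Import ring zify.
Set Implicit Arguments. Unset Strict Implicit. Unset Printing Implicit Defensive.
Import Order.TTheory GRing.Theory Num.Theory.
Local Open Scope ring_scope.

Section S.
Variable C : numClosedFieldType.
Variable N : nat.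

Definition upd (s : config N) (x : spin N) (b : bool) : config N :=
  [ffun y => if y == x then b else s y].
Definition sb_def (s : config N) (k : 'I_N) a b := upd (upd s (bondR k) a) (bondL k) b.
Fact sb_key : unit. Proof. by []. Qed.
Definition sb := locked_with sb_key sb_def.
Lemma sb_unlock : sb = sb_def. Proof. exact: unlock. Qed.

Lemma sbE s k a b y : sb s k a b y =
  if y == bondL k then b else if y == bondR k then a else s y.
Proof. by rewrite sb_unlock /sb_def /upd !ffunE. Qed.

Lemma bRL (k k' : 'I_N) : (bondR k == bondL k') = false.
Proof. by rewrite /bondR /bondL xpair_eqE andbF. Qed.
Lemma bLR (k k' : 'I_N) : (bondL k == bondR k') = false.
Proof. by rewrite /bondR /bondL xpair_eqE andbF. Qed.
Lemma bRR (k k' : 'I_N) : (bondR k == bondR k') = (k == k').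
Proof. by rewrite /bondR xpair_eqE andbT. Qed.
Lemma bLL (k k' : 'I_N) : (bondL k == bondL k') = (k == k').
Proof. by rewrite /bondL xpair_eqE andbT (inj_eq (@ordS_inj N)). Qed.

Lemma sbRd s k a b k' : sb s k a b (bondR k') = if k' == k then a else s (bondR k').
Proof. by rewrite sbE bRL bRR. Qed.
Lemma sbLd s k a b k' : sb s k a b (bondL k') = if k' == k then b else s (bondL k').
Proof. by rewrite sbE bLL bLR; case: (k' == k). Qed.

Lemma sbC s k k' a b c d : k != k' ->
  sb (sb s k a b) k' c d = sb (sb s k' c d) k a b.
Proof.
move=> kk; apply/ffunP => y; rewrite !sbE.
case: (y =P bondL k') => [->|_]; first by rewrite bLL eq_sym (negbTE kk) bLR.
case: (y =P bondR k') => [->|_]; first by rewrite bRL bRR eq_sym (negbTE kk).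
by [].
Qed.

Lemma sbK s k a b c d : sb (sb s k a b) k c d = sb s k c d.
Proof.
apply/ffunP => y; rewrite !sbE.
by case: (y == bondL k); case: (y == bondR k).
Qed.

Lemma sb_id s k : sb s k (s (bondR k)) (s (bondL k)) = s.
Proof.
apply/ffunP => y; rewrite !sbE.
by case: (y =P bondL k) => [->|_] //; case: (y =P bondR k) => [->|].
Qed.

Definition buv (a b : bool) : C := if a && b then 1 else 0.
Definition bdv (a b : bool) : C :=
  if a && ~~ b then 1 / sqrtC 2 else if ~~ a && b then - (1 / sqrtC 2) else 0.

Lemma bupE (k : 'I_N) (s : config N) : bup C k s = buv (s (bondR k)) (s (bondL k)).
Proof. by []. Qed.
Lemma bdownE (k : 'I_N) (s : config N) : bdown C k s = bdv (s (bondR k)) (s (bondL k)).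
Proof. by []. Qed.

Lemma bup_sb (k' : 'I_N) s k a b : bup C k' (sb s k a b) = if k' == k then buv a b else bup C k' s.
Proof. by rewrite !bupE sbRd sbLd; case: eqP. Qed.
Lemma bdown_sb (k' : 'I_N) s k a b : bdown C k' (sb s k a b) = if k' == k then bdv a b else bdown C k' s.
Proof. by rewrite !bdownE sbRd sbLd; case: eqP. Qed.


Definition agree (P : pred (spin N)) (s t : config N) : bool :=
  [forall x, ~~ P x ==> (s x == t x)].

Lemma agree_upd (P : pred (spin N)) x s t b : P x ->
  agree [pred y | P y && (y != x)] (upd s x b) t = (t x == b) && agree P s t.
Proof.
move=> Px; apply/idP/idP.
- move/forallP => H; apply/andP; split.
    by move: (H x); rewrite /= eqxx andbF /upd ffunE eqxx eq_sym.
  apply/forallP => y; apply/implyP => Py.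
  have yx : y != x by apply: contraNneq Py => ->.
  by move: (H y); rewrite /= (negbTE Py) /= /upd ffunE (negbTE yx).
- case/andP => /eqP tx /forallP H; apply/forallP => y; rewrite /= /upd ffunE.
  case: (y =P x) => [->|_]; first by rewrite tx eqxx implybT.
  by rewrite andbT; apply: H.
Qed.

Lemma sum_agree1 (P : pred (spin N)) x s (F : config N -> C) : P x ->
  \sum_t (if agree P s t then 1 else 0) * F t =
  \sum_(b : bool) \sum_t (if agree [pred y | P y && (y != x)] (upd s x b) t then 1 else 0) * F t.
Proof.
move=> Px; rewrite exchange_big /=; apply: eq_bigr => t _.
rewrite big_bool /= !agree_upd //.
by case: (t x); case: (agree P s t); rewrite /= ?mul0r ?mul1r ?add0r ?addr0.
Qed.

Lemma sum_agree0 (P : pred (spin N)) s (F : config N -> C) : (forall y, ~~ P y) ->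
  \sum_t (if agree P s t then 1 else 0) * F t = F s.
Proof.
move=> HP; rewrite (bigD1 s) //= big1 ?addr0.
  have -> : agree P s s by apply/forallP => y; rewrite eqxx implybT.
  by rewrite mul1r.
move=> t ts; have -> : agree P s t = false; last by rewrite mul0r.
apply/negbTE; apply: contra ts => /forallP H; apply/eqP/ffunP => y.
by have /eqP := implyP (H y) (HP y).
Qed.

Lemma sum_agree4 (P : pred (spin N)) s (F : config N -> C) x1 x2 x3 x4 :
  P x1 -> P x2 -> P x3 -> P x4 -> x2 != x1 -> x3 != x1 -> x3 != x2 ->
  x4 != x1 -> x4 != x2 -> x4 != x3 ->
  (forall y, P y -> [|| y == x1, y == x2, y == x3 | y == x4]) ->
  \sum_t (if agree P s t then 1 else 0) * F t =
  \sum_(b1 : bool) \sum_(b2 : bool) \sum_(b3 : bool) \sum_(b4 : bool)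
     F (upd (upd (upd (upd s x1 b1) x2 b2) x3 b3) x4 b4).
Proof.
move=> P1 P2 P3 P4 d21 d31 d32 d41 d42 d43 HP.
rewrite (sum_agree1 _ _ P1); apply: eq_bigr => b1 _.
rewrite (@sum_agree1 _ x2) /=; last by rewrite P2 d21.
apply: eq_bigr => b2 _.
rewrite (@sum_agree1 _ x3) /=; last by rewrite P3 d31 d32.
apply: eq_bigr => b3 _.
rewrite (@sum_agree1 _ x4) /=; last by rewrite P4 d41 d42 d43.
apply: eq_bigr => b4 _.
rewrite sum_agree0 // => y /=; apply/negP => /andP[/andP[/andP[/andP[Py n1] n2] n3] n4].
by move: (HP y Py); rewrite (negbTE n1) (negbTE n2) (negbTE n3) (negbTE n4).
Qed.


Lemma ordS_neq (hN : (1 < N)%N) (j : 'I_N) : (ordS j == j) = false.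
Proof.
apply/negbTE/eqP => /(congr1 val) /=.
have := ltn_ord j; rewrite leq_eqVlt => /orP[/eqP E|lt].
  rewrite E modnn => j0; move: E hN; rewrite -j0 => <-; by [].
rewrite modn_small // => E; move: (n_Sn j); by rewrite E.
Qed.

Definition cc : C := (1 / sqrtC 2)^*.

Lemma Qloc_formula (hN : (1 < N)%N) (j : 'I_N) (psi : state C N) s :
  Qloc j psi s = bup C j s * bup C (ordS j) s * (cc * cc) *
    (psi (sb (sb s j true false) (ordS j) true false)
     - psi (sb (sb s j true false) (ordS j) false true)
     - psi (sb (sb s j false true) (ordS j) true false)
     + psi (sb (sb s j false true) (ordS j) false true)).
Proof.
rewrite /Qloc ffunE.
transitivity (\sum_t (if agree (fun x => in_bond j x || in_bond (ordS j) x) s t then 1 else 0) *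
   (bup C j s * bup C (ordS j) s * ((bdown C j t)^* * (bdown C (ordS j) t)^*) * psi t)).
  by apply: eq_bigr => t _; rewrite !mulrA.
have e1 := ordS_neq hN j.
have e2 : (j == ordS j) = false by rewrite eq_sym.
rewrite (@sum_agree4 _ _ _ (bondR j) (bondL j) (bondR (ordS j)) (bondL (ordS j)));
  rewrite /in_bond ?bLR ?bRL ?bRR ?bLL ?e1 ?e2 ?eqxx ?orbT //; last by move=> y; rewrite -!orbA.
rewrite !big_bool /=.
have E : forall b1 b2 b3 b4, upd (upd (upd (upd s (bondR j) b1) (bondL j) b2) (bondR (ordS j)) b3) (bondL (ordS j)) b4
   = sb (sb s j b1 b2) (ordS j) b3 b4 by rewrite sb_unlock.
have c0 : (0 : C)^* = 0 by rewrite rmorph0.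
have cN : (- (1 / sqrtC 2))^* = - (1 / sqrtC 2)^* :> C by rewrite rmorphN.
rewrite !E !bdown_sb !eqxx ?e1 ?e2 /bdv /= !c0 !cN /cc.
ring.
Qed.

End S.

Lemma valSc N (j : 'I_N) : nat_of_ord (ordS j) = if j.+1 == N then 0%N else j.+1.
Proof.
rewrite /= ; have := ltn_ord j; rewrite leq_eqVlt => /orP[/eqP E|lt].
  by rewrite E modnn !eqxx.
by rewrite modn_small // (ltn_eqF lt).
Qed.

Lemma valPr N (j : 'I_N) : nat_of_ord (ord_pred j) = if j == 0 :> nat then N.-1 else j.-1.
Proof.
have lt := ltn_ord j; rewrite /=; case: eqP => [E|nz].
  by rewrite E add0n modn_small //; lia.
have -> : (j + N).-1 = (j.-1 + N)%N by lia.
by rewrite modnDr modn_small //; lia.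
Qed.

Lemma vS N (j : 'I_N) : (nat_of_ord (ordS j) = j.+1 /\ (j.+1 < N)%N) \/
   (nat_of_ord (ordS j) = 0%N /\ j.+1 = N).
Proof. rewrite valSc; case: eqP => E; [right|left]; split => //; have := ltn_ord j; lia. Qed.

Lemma vP N (j : 'I_N) : (j < N)%N /\ ((nat_of_ord (ord_pred j) = j.-1 /\ (0 < j)%N) \/
   (nat_of_ord (ord_pred j) = N.-1 /\ nat_of_ord j = 0%N)).
Proof. split; first exact: ltn_ord. rewrite valPr; case: eqP => E; [right|left]; split => //; lia. Qed.

Ltac gen_ords :=
  repeat match goal with
  | |- context [nat_of_ord (ordS ?a)] => move: (vS a); generalize (nat_of_ord (ordS a))
  | |- context [nat_of_ord (ord_pred ?a)] => move: (vP a); generalize (nat_of_ord (ord_pred a))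
  end.

Ltac neqt := apply/negbTE/eqP => /(congr1 (@nat_of_ord _)); gen_ords; lia.


Section T.
Variable C : numClosedFieldType.
Variable N : nat.
Variable i : 'I_N.
Hypothesis hN : (3 < N)%N.

Local Notation k1 := (ord_pred i).
Local Notation k3 := (ordS i).

Lemma hN1 : (1 < N)%N. Proof. lia. Qed.

Lemma e12 : (k1 == i) = false. Proof. neqt. Qed.
Lemma e21 : (i == k1) = false. Proof. neqt. Qed.
Lemma e23 : (i == k3) = false. Proof. neqt. Qed.
Lemma e32 : (k3 == i) = false. Proof. neqt. Qed.
Lemma e13 : (k1 == k3) = false. Proof. neqt. Qed.
Lemma e31 : (k3 == k1) = false. Proof. neqt. Qed.

Definition sb3 s a1 a2 b1 b2 c1 c2 : config N :=
  sb (sb (sb s k1 a1 a2) i b1 b2) k3 c1 c2.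

Definition InvA (psi : state C N) k := forall s,
  psi (sb s k false false) = 0 /\ psi (sb s k true false) + psi (sb s k false true) = 0.

Definition Inv (psi : state C N) :=
  [/\ InvA psi k1, InvA psi i, InvA psi k3,
      forall s, psi (sb3 s true false true true true false) = 0 &
      forall s, psi (sb3 s true true true true true false) + psi (sb3 s true false true true true true) = 0].

Lemma InvA_0 psi k : InvA psi k -> forall t, psi (sb t k false false) = 0.
Proof. by move=> H t; case: (H t). Qed.
Lemma InvA_N psi k : InvA psi k -> forall t, psi (sb t k false true) = - psi (sb t k true false).
Proof. by move=> H t; apply/eqP; rewrite -subr_eq0 opprK addrC; case: (H t) => _ ->. Qed.

Lemma sb2C (s : config N) k j j' a b x y z w : k != j -> k != j' ->
  sb (sb (sb s k a b) j x y) j' z w = sb (sb (sb s j x y) j' z w) k a b.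
Proof. by move=> H1 H2; rewrite (@sbC N _ k j) // (@sbC N _ k j'). Qed.

Lemma sb2C' (s : config N) k j j' : k != j -> k != j' -> forall a b x y z w,
  sb (sb (sb s k a b) j x y) j' z w = sb (sb (sb s j x y) j' z w) k a b.
Proof. by move=> H1 H2 a b x y z w; apply: sb2C. Qed.

Lemma sb3_1 s a1 a2 b1 b2 c1 c2 : sb3 s a1 a2 b1 b2 c1 c2 = sb (sb (sb s i b1 b2) k3 c1 c2) k1 a1 a2.
Proof. by rewrite /sb3 sb2C // ?e12 ?e13. Qed.
Lemma sb3_2 s a1 a2 b1 b2 c1 c2 : sb3 s a1 a2 b1 b2 c1 c2 = sb (sb (sb s k1 a1 a2) k3 c1 c2) i b1 b2.
Proof. by rewrite /sb3 (@sbC N _ i k3) // e23. Qed.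

Lemma sb3_set1 s a1 a2 b1 b2 c1 c2 x y : sb (sb3 s a1 a2 b1 b2 c1 c2) k1 x y = sb3 s x y b1 b2 c1 c2.
Proof. by rewrite sb3_1 sbK -sb3_1. Qed.
Lemma sb3_set2 s a1 a2 b1 b2 c1 c2 x y : sb (sb3 s a1 a2 b1 b2 c1 c2) i x y = sb3 s a1 a2 x y c1 c2.
Proof. by rewrite sb3_2 sbK -sb3_2. Qed.
Lemma sb3_set3 s a1 a2 b1 b2 c1 c2 x y : sb (sb3 s a1 a2 b1 b2 c1 c2) k3 x y = sb3 s a1 a2 b1 b2 x y.
Proof. by rewrite /sb3 sbK. Qed.

Lemma sb3_out s j x y a1 a2 b1 b2 c1 c2 : j != k1 -> j != i -> j != k3 ->
  sb (sb3 s a1 a2 b1 b2 c1 c2) j x y = sb3 (sb s j x y) a1 a2 b1 b2 c1 c2.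
Proof.
move=> h1 h2 h3; rewrite /sb3.
have h1' : k1 != j by rewrite eq_sym.
have h2' : i != j by rewrite eq_sym.
have h3' : k3 != j by rewrite eq_sym.
rewrite (@sbC N _ k3 j _ _ _ _ h3').
rewrite (@sbC N _ i j _ _ _ _ h2').
by rewrite (@sbC N _ k1 j _ _ _ _ h1').
Qed.

Lemma sb3_out' j : j != k1 -> j != i -> j != k3 -> forall s x y a1 a2 b1 b2 c1 c2,
  sb (sb3 s a1 a2 b1 b2 c1 c2) j x y = sb3 (sb s j x y) a1 a2 b1 b2 c1 c2.
Proof. by move=> h1 h2 h3 *; apply: sb3_out. Qed.

Lemma bup3 j s a1 a2 b1 b2 c1 c2 : bup C j (sb3 s a1 a2 b1 b2 c1 c2) =
  if j == k3 then buv C c1 c2 else if j == i then buv C b1 b2 else if j == k1 then buv C a1 a2 else bup C j s.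
Proof. by rewrite /sb3 !bup_sb. Qed.
Lemma bdown3 j s a1 a2 b1 b2 c1 c2 : bdown C j (sb3 s a1 a2 b1 b2 c1 c2) =
  if j == k3 then bdv C c1 c2 else if j == i then bdv C b1 b2 else if j == k1 then bdv C a1 a2 else bdown C j s.
Proof. by rewrite /sb3 !bdown_sb. Qed.


Lemma QlocA j psi k : InvA psi k -> InvA (Qloc j psi) k.
Proof.
move=> H s; rewrite !(Qloc_formula hN1).
have H0 := InvA_0 H; have HN := InvA_N H.
case: (eqVneq k j) => [<-|kj].
  by rewrite !bup_sb !eqxx /buv /= !mul0r addr0.
case: (eqVneq k (ordS j)) => [E|kj1].
  by rewrite -E !bup_sb !eqxx /buv /= !mulr0 !mul0r addr0.
have jk : (j == k) = false by rewrite eq_sym (negbTE kj).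
have j1k : (ordS j == k) = false by rewrite eq_sym (negbTE kj1).
rewrite !bup_sb jk j1k !(sb2C' s kj kj1); split.
  by rewrite !H0 !subrr add0r mulr0.
rewrite !HN; ring.
Qed.

Lemma QfracA psi k : InvA psi k -> InvA (Qfrac psi) k.
Proof.
move=> H s; rewrite /Qfrac !ffunE; split.
  by rewrite big1 // => j _; case: (QlocA j H s) => -> _; rewrite mulr0.
rewrite -big_split big1 //= => j _; rewrite -mulrDr.
by case: (QlocA j H s) => _ ->; rewrite mulr0.
Qed.

Lemma Qloc_b1 psi j : Inv psi -> forall s, Qloc j psi (sb3 s true false true true true false) = 0.
Proof.
case=> A1 A2 A3 B1 B2 s; rewrite (Qloc_formula hN1).
case: (eqVneq j k1) => [->|jk1].
  by rewrite !bup3 e13 e12 !eqxx /buv /= !mul0r.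
case: (eqVneq j k3) => [->|jk3].
  by rewrite !bup3 !eqxx /buv /= !mul0r.
case: (eqVneq (ordS j) k1) => [->|j1k1].
  by rewrite !bup3 e13 e12 !eqxx /buv /= !mulr0 !mul0r.
case: (eqVneq (ordS j) k3) => [->|j1k3].
  by rewrite !bup3 !eqxx /buv /= !mulr0 !mul0r.
have ji : j != i by apply: contraNneq j1k3 => ->.
have j1i : ordS j != i.
  by apply: contraNneq jk1 => E; rewrite -E ordSK.
rewrite !(sb3_out' jk1 ji jk3) !(sb3_out' j1k1 j1i j1k3) !B1; ring.
Qed.

Lemma Qfrac_b1 psi : Inv psi -> forall s, Qfrac psi (sb3 s true false true true true false) = 0.
Proof.
move=> H s; rewrite /Qfrac ffunE big1 // => j _.
by rewrite Qloc_b1 // mulr0.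
Qed.


Lemma Ip1 psi : InvA psi k1 -> forall s b1 b2 c1 c2,
  psi (sb3 s false true b1 b2 c1 c2) = - psi (sb3 s true false b1 b2 c1 c2).
Proof. by move=> H s b1 b2 c1 c2; rewrite !sb3_1; apply: InvA_N. Qed.
Lemma Ip2 psi : InvA psi i -> forall s a1 a2 c1 c2,
  psi (sb3 s a1 a2 false true c1 c2) = - psi (sb3 s a1 a2 true false c1 c2).
Proof. by move=> H s a1 a2 c1 c2; rewrite !sb3_2; apply: InvA_N. Qed.
Lemma Ip3 psi : InvA psi k3 -> forall s a1 a2 b1 b2,
  psi (sb3 s a1 a2 b1 b2 false true) = - psi (sb3 s a1 a2 b1 b2 true false).
Proof. by move=> H s a1 a2 b1 b2; rewrite /sb3; apply: InvA_N. Qed.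

Hypothesis heven : ~~ odd N.

Lemma parity : (-1) ^+ (nat_of_ord k1) = - (-1) ^+ (nat_of_ord i) :> C.
Proof.
have := vS k1; rewrite ord_predK => -[[-> _]|[-> E]].
  by rewrite exprS mulN1r opprK.
have ok : odd k1.
  have : ~~ odd (k1.+1) by rewrite E.
  by rewrite /= negbK.
by rewrite -signr_odd ok expr0 /= expr1.
Qed.

Lemma Qfrac_b2 psi : Inv psi -> forall s,
  Qfrac psi (sb3 s true true true true true false) + Qfrac psi (sb3 s true false true true true true) = 0.
Proof.
move=> H s; have [A1 A2 A3 B1 B2] := H.
have B2' : forall t, psi (sb3 t true false true true true true) = - psi (sb3 t true true true true true false).
  by move=> t; apply/eqP; rewrite -subr_eq0 opprK addrC B2.
rewrite /Qfrac !ffunE -big_split /=.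
rewrite (bigD1 k1) // (bigD1 i); last by rewrite e21.
rewrite big1 ?addr0; last first.
  move=> j; rewrite ?andTb => /andP[jk1 ji]; rewrite -mulrDr.
  suff -> : Qloc j psi (sb3 s true true true true true false) +
            Qloc j psi (sb3 s true false true true true true) = 0 by rewrite mulr0.
  rewrite !(Qloc_formula hN1).
  case: (eqVneq j k3) => [->|jk3].
    case: (eqVneq (ordS k3) k1) => [E|k4k1].
      by rewrite E !bup3 !eqxx e13 e12 /buv /= !mulr0 !mul0r addr0.
    have k4k3 : (ordS k3 == k3) = false := ordS_neq hN1 _.
    have k4i : (ordS k3 == i) = false by neqt.
    rewrite !bup3 !eqxx k4k3 k4i (negbTE k4k1) /buv /= !sb3_set3.
    rewrite !(sb3_out' k4k1 (negbT k4i) (negbT k4k3)).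
    rewrite !(Ip3 A3) !B1; ring.
  case: (eqVneq (ordS j) k1) => [E|j1k1].
    rewrite E !bup3 e13 e12 !eqxx (negbTE jk3) (negbTE ji) (negbTE jk1) /buv /=.
    rewrite !(sb3_out' jk1 ji jk3) !sb3_set1 !(Ip1 A1) !B1; ring.
  have j1i : ordS j != i by apply: contraNneq jk1 => E; rewrite -E ordSK.
  have j1k3 : ordS j != k3 by apply: contraNneq ji => /ordS_inj ->.
  rewrite !bup3 (negbTE jk3) (negbTE ji) (negbTE jk1) (negbTE j1k3) (negbTE j1i) (negbTE j1k1).
  rewrite !(sb3_out' jk1 ji jk3) !(sb3_out' j1k1 j1i j1k3) !B2'; ring.
rewrite parity !(Qloc_formula hN1) ord_predK !bup3 !eqxx ?e12 ?e21 ?e13 ?e31 ?e23 ?e32 /buv /=.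
rewrite !sb3_set1 !sb3_set2 !sb3_set3 !(Ip1 A1) !(Ip2 A2) !(Ip3 A3); ring.
Qed.


Lemma Inv_Q psi : Inv psi -> Inv (Qfrac psi).
Proof.
move=> H; have [A1 A2 A3 B1 B2] := H; split.
- exact: QfracA.
- exact: QfracA.
- exact: QfracA.
- exact: Qfrac_b1.
- exact: Qfrac_b2.
Qed.

Lemma prod_split k (t : config N) :
  \prod_(j : 'I_N) bdown C j t = bdown C k t * \prod_(j | j != k) bdown C j t.
Proof. by rewrite (bigD1 k). Qed.

Lemma InvA_vbs k : InvA (vbs C N) k.
Proof.
move=> s; rewrite /vbs !ffunE; split.
  by rewrite (prod_split k) bdown_sb !eqxx /bdv /= mul0r.
have E : forall a b, \prod_(j | j != k) bdown C j (sb s k a b) = \prod_(j | j != k) bdown C j s.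
  by move=> a b; apply: eq_bigr => j jk; rewrite bdown_sb (negbTE jk).
rewrite !(prod_split k) !bdown_sb !eqxx !E /bdv /=; ring.
Qed.

Lemma Inv_vbs : Inv (vbs C N).
Proof.
split; try exact: InvA_vbs.
  by move=> s; rewrite /vbs ffunE (prod_split i) bdown3 e23 !eqxx /bdv /= mul0r.
by move=> s; rewrite /vbs !ffunE !(prod_split i) !bdown3 e23 !eqxx /bdv /= !mul0r addr0.
Qed.

Lemma expand psi k : InvA psi k -> forall s,
  psi s = bup C k s * psi (sb s k true true) + bdown C k s * (sqrtC 2 * psi (sb s k true false)).
Proof.
move=> H s; have H0 := InvA_0 H; have HN := InvA_N H.
have s2 : sqrtC 2 != 0 :> C by rewrite sqrtC_eq0 pnatr_eq0.
rewrite -{1}(sb_id s k) bupE bdownE.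
case: (s (bondR k)); case: (s (bondL k)); rewrite /buv /bdv /=.
- by rewrite mul1r mul0r addr0.
- by rewrite mul0r add0r mulrA div1r mulVf // mul1r.
- by rewrite HN mul0r add0r mulrA mulNr div1r mulVf // mulN1r.
- by rewrite H0 !mul0r addr0.
Qed.

Lemma sb3_dep (t u : config N) a1 a2 b1 b2 c1 c2 : (forall x, outside3 i x -> t x = u x) ->
  sb3 t a1 a2 b1 b2 c1 c2 = sb3 u a1 a2 b1 b2 c1 c2.
Proof.
move=> H; apply/ffunP => y; rewrite /sb3 !sbE.
case: ifP => // n1; case: ifP => // n2; case: ifP => // n3;
case: ifP => // n4; case: ifP => // n5; case: ifP => // n6.
by apply: H; rewrite /outside3 /in_bond n1 n2 n3 n4 n5 n6.
Qed.

Lemma final psi : Inv psi ->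
  exists (Xi0 : bool -> bool -> state C N) (Xi1 Xi2 : state C N),
    (forall a b, depends_only (outside3 i) (Xi0 a b)) /\
    depends_only (outside3 i) Xi1 /\
    depends_only (outside3 i) Xi2 /\
    forall s : config N,
      psi s =
        \sum_(a : bool) \sum_(b : bool)
           bstate C a (ord_pred i) s * bdown C i s * bstate C b (ordS i) s
           * Xi0 a b s
      + (bup C (ord_pred i) s * bup C i s * bdown C (ordS i) s
         - bdown C (ord_pred i) s * bup C i s * bup C (ordS i) s) * Xi1 s
      + bup C (ord_pred i) s * bup C i s * bup C (ordS i) s * Xi2 s.
Proof.
move=> H; have [A1 A2 A3 B1 B2] := H.
have B2' : forall t, psi (sb3 t true false true true true true) = - psi (sb3 t true true true true true false).
  by move=> t; apply/eqP; rewrite -subr_eq0 opprK addrC B2.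
exists (fun a c => [ffun t => (if a then 1 else sqrtC 2) * sqrtC 2 * (if c then 1 else sqrtC 2)
                     * psi (sb3 t true a true false true c)]).
exists [ffun t => sqrtC 2 * psi (sb3 t true true true true true false)].
exists [ffun t => psi (sb3 t true true true true true true)].
split; [|split; [|split]].
- by move=> a b t u Htu; rewrite !ffunE (sb3_dep _ _ _ _ _ _ Htu).
- by move=> t u Htu; rewrite !ffunE (sb3_dep _ _ _ _ _ _ Htu).
- by move=> t u Htu; rewrite !ffunE (sb3_dep _ _ _ _ _ _ Htu).
move=> s; rewrite !big_bool /= !ffunE.
rewrite /sb3 (expand A1 s) (expand A2 (sb s k1 true true)) (expand A2 (sb s k1 true false)).
rewrite (expand A3 (sb (sb s k1 true true) i true true)) (expand A3 (sb (sb s k1 true true) i true false)).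
rewrite (expand A3 (sb (sb s k1 true false) i true true)) (expand A3 (sb (sb s k1 true false) i true false)).
rewrite !bup_sb !bdown_sb e21 e31 e32.
rewrite /sb3 in B1 B2'; rewrite B1 B2'.
ring.
Qed.

End T.

Unset Implicit Arguments.

Theorem lemma1 (C : numClosedFieldType) (N : nat) (hN : (4 <= N)%N)
  (heven : ~~ odd N) (n : nat) (i : 'I_N) :
  exists (Xi0 : bool -> bool -> state C N) (Xi1 Xi2 : state C N),
    (forall a b, depends_only (outside3 i) (Xi0 a b)) /\
    depends_only (outside3 i) Xi1 /\
    depends_only (outside3 i) Xi2 /\
    forall s : config N,
      Sfrac C N n s =
        \sum_(a : bool) \sum_(b : bool)
           bstate C a (ord_pred i) s * bdown C i s * bstate C b (ordS i) s
           * Xi0 a b s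
      + (bup C (ord_pred i) s * bup C i s * bdown C (ordS i) s
         - bdown C (ord_pred i) s * bup C i s * bup C (ordS i) s) * Xi1 s
      + bup C (ord_pred i) s * bup C i s * bup C (ordS i) s * Xi2 s.
Proof.
apply: (final hN).
elim: n => [|n IH]; first exact: (Inv_vbs C i hN).
exact: (Inv_Q hN heven IH).
Qed.
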